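(* Let $E$ be a row-finite graph, $k$ a field, $h$ a positive integer, and suppose $\{1,\dots,h\}=\bigsqcup_{v\in E^0}Z(v)$ for subsets $Z(v)$. Let $\sigma=\bigsqcup_v\sigma_v$ be a permutation of $\{1,\dots,h\}$ where each $\sigma_v$ is a permutation of $Z(v)$, and set $S=\sum_{v\in E^0}\sum_{t\in Z(v)}vE_{t,\sigma_v(t)}\in M_h(L_k(E))$. Then $SS^*=S^*S=\sum_{v}\sum_{t\in Z(v)}vE_{t,t}$ is a projection in $M_h(L_k(E))$, and $$[S+(1_h-SS^* )]_1=\sum_{v\in E^0}[\operatorname{sign}(\sigma_v)v]_1\in K_1(L_k(E)).$$
   Context: $L_k(E)$ is the Leavitt path algebra of the row-finite graph $E$ (generated by $E^0\cup E^1\cup\{e^*\}$ with relations $vw=\delta_{v,w}v$, $s(e)e=e=er(e)$, $r(e)e^*=e^*=e^*s(e)$, $e^*f=\delta_{e,f}r(e)$, $v=\sum_{s(e)=v}ee^*$ for non-sinks), with involution fixing vertices and sending $e\mapsto e^*$. $E_{s,t}$ are matrix units; $1_h$ is the identity of $M_h$ over the unitization $\widetilde{L_k(E)}$, and $[U]_1$ denotes the class in $K_1(L_k(E))$ of an invertible matrix over $\widetilde{L_k(E)}$ congruent to $1$ modulo $L_k(E)$. For $\lambda\in k^\times$ and $v\in E^0$, $[\lambda v]_1$ denotes the class of $\lambda v+(1-v)$. *)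

(* Defs.v *)
From HB Require Import structures.
From mathcomp Require Import all_boot all_order all_algebra all_fingroup.
From Stdlib Require List.
Set Implicit Arguments. Unset Strict Implicit. Unset Printing Implicit Defensive.
Import GRing.Theory.
Local Open Scope ring_scope.

(* A row-finite directed graph E = (E^0, E^1, s, r).  Row-finiteness is
   witnessed by a duplicate-free finite list [out v] of the edges with source v. *)
Record rf_graph := RFGraph {
  V0 : eqType;
  E1 : Type;
  src : E1 -> V0;
  rng : E1 -> V0;
  out : V0 -> seq E1;
  out_spec : forall v e, List.In e (out v) <-> src e = v;
  out_nodup : forall v, List.NoDup (out v)
}.

Section Leavitt.
Variable k : fieldType.
Variable E : rf_graph.

(* p v, a e, b e play the roles of v, e, e^* ; the Leavitt relations. *)
Definition leavitt_family (B : algType k)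
  (p : V0 E -> B) (a b : E1 E -> B) : Prop :=
  (forall v, p v * p v = p v) /\
  (forall v w, v <> w -> p v * p w = 0) /\
  (forall e, p (src e) * a e = a e /\ a e * p (rng e) = a e) /\
  (forall e, p (rng e) * b e = b e /\ b e * p (src e) = b e) /\
  (forall e, b e * a e = p (rng e)) /\
  (forall e f, e <> f -> b e * a f = 0) /\
  (forall v, out v <> [::] -> p v = \sum_(e <- out v) a e * b e).

Definition alg_hom (A B : algType k) (f : A -> B) : Prop :=
  [/\ f 1 = 1, (forall x y, f (x + y) = f x + f y),
      (forall x y, f (x * y) = f x * f y) &
      (forall (c : k) x, f (c *: x) = c *: f x)].

(* R (with p, a, b) is the universal UNITAL k-algebra generated by a Leavitt
   E-family.  Since all Leavitt relations lie in the augmentation ideal of the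
   free unital algebra, R is exactly the unitization ~L_k(E) = k 1 (+) L_k(E),
   with L_k(E) the ideal generated by p, a, b. *)
Definition leavitt_unitization (R : algType k)
  (p : V0 E -> R) (a b : E1 E -> R) : Prop :=
  leavitt_family p a b /\
  forall (B : algType k) (p' : V0 E -> B) (a' b' : E1 E -> B),
    leavitt_family p' a' b' ->
    exists f : R -> B,
      [/\ alg_hom f, (forall v, f (p v) = p' v), (forall e, f (a e) = a' e),
          (forall e, f (b e) = b' e) &
          (forall g : R -> B, alg_hom g -> (forall v, g (p v) = p' v) ->
             (forall e, g (a e) = a' e) -> (forall e, g (b e) = b' e) ->
             forall x, g x = f x)].

Definition leavitt_involution (R : algType k) (star : R -> R)
  (p : V0 E -> R) (a b : E1 E -> R) : Prop :=
  star 1 = 1 /\ (forall x y, star (x + y) = star x + star y) /\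
  (forall (c : k) x, star (c *: x) = c *: star x) /\
  (forall x y, star (x * y) = star y * star x) /\
  (forall x, star (star x) = x) /\
  (forall v, star (p v) = p v) /\
  (forall e, star (a e) = b e /\ star (b e) = a e).
End Leavitt.

Definition mxstar (R : pzRingType) (f : R -> R) n (M : 'M[R]_n) : 'M[R]_n :=
  \matrix_(i, j) f (M j i).

Definition mx_invertible (R : pzRingType) n (M : 'M[R]_n) : Prop :=
  exists N : 'M[R]_n, M *m N = 1%:M /\ N *m M = 1%:M.

Definition elementary_mx (R : pzRingType) n (M : 'M[R]_n) : Prop :=
  exists (i j : 'I_n) (c : R), i != j /\ M = 1%:M + c *: delta_mx i j.

Definition elem_prod (R : pzRingType) n (M : 'M[R]_n) : Prop :=
  exists l : seq 'M[R]_n, (forall N, N \in l -> elementary_mx N) /\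
                          M = foldr mulmx 1%:M l.

(* Equality of classes in K_1(R) = GL(R)/E(R) of invertible matrices
   A : 'M_m and B : 'M_n: after stabilising to a common size,
   A = P B with P in E(R). *)
Definition k1_eq (R : pzRingType) m (A : 'M[R]_m) n (B : 'M[R]_n) : Prop :=
  exists (x y : nat) (Hxy : (m + x = n + y)%N) (P : 'M[R]_(m + x)),
    elem_prod P /\
    block_mx A 0 0 (1%:M : 'M[R]_x) =
      P *m castmx (esym Hxy, esym Hxy) (block_mx B 0 0 (1%:M : 'M[R]_y)).

(* sigma_v as a permutation of {1..h} which is sigma on Z(v) and the identity
   elsewhere (same sign as sigma_v viewed in Sym(Z(v))). *)
Lemma restr_perm_inj (V : eqType) (h : nat) (z : 'I_h -> V) (s : 'S_h)
  (Hs : forall t, z (s t) = z t) (v : V) :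
  injective (fun t => if z t == v then s t else t).
Proof.
move=> t1 t2 /=.
case: ifP => H1; case: ifP => H2.
- exact: perm_inj.
- by move=> E; move: H2; rewrite -E Hs H1.
- by move=> E; move: H1; rewrite E Hs H2.
- by [].
Qed.

Definition restr_perm_v (V : eqType) h (z : 'I_h -> V) (s : 'S_h)
  (Hs : forall t, z (s t) = z t) (v : V) : 'S_h := perm (@restr_perm_inj V h z s Hs v).

(* Main.v *)
Require Import Defs.
From HB Require Import structures.
From mathcomp Require Import all_boot all_order all_algebra all_fingroup.
Import GRing.Theory.
Local Open Scope ring_scope.
Set Implicit Arguments. Unset Strict Implicit. Unset Printing Implicit Defensive.
Section Gen.
Variable T : pzRingType.
Variable n : nat.
Implicit Types A B C P Q X : 'M[T]_n.

Definition mxeq A B := exists P, elem_prod P /\ A = P *m B.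

Lemma foldr_mulmx (l : seq 'M[T]_n) X : foldr mulmx 1%:M l *m X = foldr mulmx X l.
Proof. by elim: l => [|Y l IH] /=; rewrite ?mul1mx // -mulmxA IH. Qed.

Lemma ep1 : elem_prod (1%:M : 'M[T]_n).
Proof. by exists [::]. Qed.

Lemma epM P Q : elem_prod P -> elem_prod Q -> elem_prod (P *m Q).
Proof.
move=> [l1 [H1 ->]] [l2 [H2 ->]]; exists (l1 ++ l2); split.
  by move=> N; rewrite mem_cat => /orP[/H1|/H2].
by rewrite foldr_cat foldr_mulmx.
Qed.

Lemma ep_elem X : elementary_mx X -> elem_prod X.
Proof. by move=> HX; exists [:: X]; split; [move=> N; rewrite inE => /eqP ->|rewrite /= mulmx1]. Qed.

Lemma delta_mulE (i j : 'I_n) A r s :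
  (delta_mx i j *m A) r s = if r == i then A j s else 0.
Proof.
rewrite mxE (bigD1 j) //= mxE eqxx andbT big1 ?addr0.
  by case: (r == i); rewrite ?mul1r ?mul0r.
by move=> l /negbTE Hl; rewrite mxE Hl andbF mul0r.
Qed.

Lemma elemopE (i j : 'I_n) (c : T) A r s :
  ((1%:M + c *: delta_mx i j) *m A) r s = A r s + (if r == i then c * A j s else 0).
Proof.
rewrite mulmxDl mul1mx mxE -scalemxAl mxE delta_mulE.
by case: (r == i); rewrite ?mulr0.
Qed.

Lemma elem_inv X : elementary_mx X -> exists Y, elementary_mx Y /\ Y *m X = 1%:M.
Proof.
move=> [i [j [c [Hij ->]]]]; exists (1%:M + (- c) *: delta_mx i j); split.
  by exists i, j, (-c).
apply/matrixP => r s; rewrite elemopE !mxE.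
rewrite [j == i]eq_sym (negbTE Hij) /= mulr0 addr0.
case: (r =P i) => [->|_]; last by rewrite mulr0 !addr0.
rewrite /= [j == s]eq_sym.
case: (s == j); rewrite ?mulr1 ?mulr0 ?addr0 ?mul1r //=. by rewrite addrK.
Qed.

Lemma ep_inv P : elem_prod P -> exists Q, elem_prod Q /\ Q *m P = 1%:M.
Proof.
move=> [l [Hl ->]]; elim: l Hl => [|Y l IH] Hl /=.
  by exists 1%:M; split; [exact: ep1|rewrite mulmx1].
have [Q [HQ HQl]] : exists Q, elem_prod Q /\ Q *m foldr mulmx 1%:M l = 1%:M.
  by apply: IH => N HN; apply: Hl; rewrite inE HN orbT.
have [Y' [HY' HYY]] := @elem_inv Y (Hl Y (mem_head _ _)).
exists (Q *m Y'); split; first by apply: epM => //; apply: ep_elem.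
by rewrite mulmxA -(mulmxA Q) HYY mulmx1.
Qed.

Lemma equiv_refl A : mxeq A A.
Proof. by exists 1%:M; split; [exact: ep1|rewrite mul1mx]. Qed.

Lemma equiv_trans A B C : mxeq A B -> mxeq B C -> mxeq A C.
Proof.
move=> [P [HP ->]] [Q [HQ ->]]; exists (P *m Q); split; first exact: epM.
by rewrite mulmxA.
Qed.

Lemma equiv_sym A B : mxeq A B -> mxeq B A.
Proof.
move=> [P [HP ->]]; have [Q [HQ HQP]] := @ep_inv P HP.
by exists Q; split => //; rewrite mulmxA HQP mul1mx.
Qed.

Lemma equiv_elem X A : elementary_mx X -> mxeq (X *m A) A.
Proof. by move=> HX; exists X; split => //; exact: ep_elem. Qed.

Section Diag.
Variable d : 'rV[T]_n.
Hypothesis Hd : forall i, d 0 i * d 0 i = 1.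

Lemma diag_invol : diag_mx d *m diag_mx d = 1%:M.
Proof.
apply/matrixP => r s; rewrite mul_diag_mx !mxE.
by case: (r =P s) => [->|_]; rewrite ?mulr0 // mulr1n Hd.
Qed.

Lemma diag_conj X : elementary_mx X -> elementary_mx (diag_mx d *m X *m diag_mx d).
Proof.
move=> [i [j [c [Hij ->]]]]; exists i, j, (d 0 i * c * d 0 j); split => //.
apply/matrixP => r s; rewrite mul_mx_diag mul_diag_mx !mxE.
rewrite mulrDr mulrDl.
have -> : d 0 r * (r == s)%:R * d 0 s = (r == s)%:R.
  by case: eqP => [->|_]; rewrite ?mulr1 ?Hd // mulr0 mul0r.
by case: andP => [[/eqP -> /eqP ->]|_]; rewrite ?mulr1 ?mulr0 ?mul0r ?addr0 // !mulrA.
Qed.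

Lemma ep_conj P : elem_prod P -> elem_prod (diag_mx d *m P *m diag_mx d).
Proof.
move=> [l [Hl ->]]; elim: l Hl => [|Y l IH] Hl /=.
  by rewrite mulmx1 diag_invol; exact: ep1.
have -> : diag_mx d *m (Y *m foldr mulmx 1%:M l) *m diag_mx d =
  (diag_mx d *m Y *m diag_mx d) *m (diag_mx d *m foldr mulmx 1%:M l *m diag_mx d).
  by rewrite !mulmxA -(mulmxA _ (diag_mx d) (diag_mx d)) diag_invol mulmx1.
apply: epM; first by apply/ep_elem/diag_conj/Hl/mem_head.
by apply: IH => N HN; apply: Hl; rewrite inE HN orbT.
Qed.

Lemma equiv_mul A B C : mxeq A (diag_mx d) -> mxeq B C -> mxeq (A *m B) (diag_mx d *m C).
Proof.
move=> [P [HP ->]] [Q [HQ ->]].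
exists (P *m (diag_mx d *m Q *m diag_mx d)); split.
  by apply: epM => //; apply: ep_conj.
by rewrite !mulmxA -(mulmxA _ (diag_mx d) (diag_mx d)) diag_invol mulmx1.
Qed.
End Diag.

Lemma equiv_foldr (I : Type) (s : seq I) (A : I -> 'M[T]_n) (d : I -> 'rV[T]_n) :
  (forall x i, d x 0 i * d x 0 i = 1) -> (forall x, mxeq (A x) (diag_mx (d x))) ->
  mxeq (foldr mulmx 1%:M (map A s)) (foldr mulmx 1%:M (map (fun x => diag_mx (d x)) s)).
Proof.
move=> Hd HA; elim: s => [|x s IH] /=; first exact: equiv_refl.
by apply: equiv_mul => //; apply: Hd.
Qed.

Definition Dk (c : T) (q : 'I_n) : 'M[T]_n := diag_mx (\row_i if i == q then c else 1).

Lemma Dk_invol q i : (\row_(i0 < n) if i0 == q then -1 else 1 : T) 0 i * (\row_(i0 < n) if i0 == q then -1 else 1 : T) 0 i = 1.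
Proof. by rewrite !mxE; case: (i == q); rewrite ?mulr1 ?mulrNN ?mulr1. Qed.

Lemma Dk1 q : Dk 1 q = 1%:M.
Proof. by apply/matrixP => r s; rewrite !mxE; case: (r == q). Qed.

Lemma DkM c1 c2 q : Dk c1 q *m Dk c2 q = Dk (c1 * c2) q.
Proof.
apply/matrixP => r s; rewrite mul_diag_mx !mxE.
by case: (r =P s) => [->|_]; case: (s == q); rewrite ?mulr1n ?mulr0n ?mulr0 ?mulr1.
Qed.

Lemma tperm_factor (a b : 'I_n) : a != b ->
  perm_mx (tperm a b) = (1%:M + 1 *: delta_mx a b) *m ((1%:M + (-1) *: delta_mx b a) *m
     ((1%:M + 1 *: delta_mx a b) *m Dk (-1) a)).
Proof.
move=> Hab; apply/matrixP => r s; rewrite !elemopE !mxE.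
rewrite eqxx [b == a]eq_sym (negbTE Hab) !mul1r !mulN1r.
have Hba : b != a by rewrite eq_sym.
have [->|ra] := eqVneq r a; [rewrite tpermL| have [->|rb] := eqVneq r b; [rewrite tpermR|rewrite tpermD 1?eq_sym //]];
have [->|sa] := eqVneq s a; try (have [->|sb] := eqVneq s b);
rewrite ?eqxx ?(negbTE Hab) ?(negbTE Hba) ?(negbTE ra) ?(negbTE rb) ?(negbTE sa) ?(negbTE sb) ?(eq_sym a s) ?(eq_sym b s) ?(negbTE sa) ?(negbTE sb) /=;
rewrite ?mulr1n ?mulr0n ?addr0 ?add0r ?oppr0 ?opprK ?addNr ?addrN ?addrA ?addrK ?subrr //.
all: by rewrite ?addr0.
Qed.

Arguments equiv_trans {A B C}.
Arguments equiv_sym {A B}.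

Lemma equiv_elemL X A B : elementary_mx X -> mxeq A B -> mxeq (X *m A) B.
Proof. by move=> HX HAB; exact: equiv_trans (@equiv_elem X A HX) HAB. Qed.

Lemma tperm_equiv (a b : 'I_n) : a != b -> mxeq (perm_mx (tperm a b)) (Dk (-1) a).
Proof.
move=> Hab; rewrite tperm_factor //.
apply: equiv_elemL; first by exists a, b, 1.
apply: equiv_elemL; first by exists b, a, (-1); rewrite eq_sym.
apply: equiv_elemL; first by exists a, b, 1.
exact: equiv_refl.
Qed.

Arguments tperm_equiv {a b}.

Lemma Dk_move (a q : 'I_n) : mxeq (Dk (-1) a) (Dk (-1) q).
Proof.
have [->|Haq] := eqVneq a q; first exact: equiv_refl.
apply: equiv_trans (equiv_sym (tperm_equiv Haq)) _.
by rewrite tpermC; apply: tperm_equiv; rewrite eq_sym.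
Qed.

Lemma perm_equiv (s : 'S_n) q : mxeq (perm_mx s) (Dk ((-1) ^+ odd_perm s) q).
Proof.
have [ts -> Hts] := prod_tpermP s.
elim: ts Hts => [|t ts IH] /=.
  by rewrite big_nil perm_mx1 odd_perm1 expr0 Dk1 => _; exact: equiv_refl.
move=> /andP[Ht Hts]; rewrite big_cons perm_mxM odd_permM odd_tperm Ht signr_addb expr1 -DkM.
apply: equiv_mul; first exact: Dk_invol.
  exact: equiv_trans (tperm_equiv Ht) (Dk_move _ _).
exact: IH.
Qed.
End Gen.

Section Transport.
Variable k : fieldType.
Variable R : algType k.
Variable N : nat.

Definition Tm (e : R) (A : 'M[k]_N) : 'M[R]_N := \matrix_(i, j) (A i j *: e).

Lemma TmM e f A B : Tm e A *m Tm f B = Tm (e * f) (A *m B).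
Proof.
apply/matrixP => r s; rewrite !mxE scaler_suml; apply: eq_bigr => l _.
by rewrite !mxE -scalerAl -scalerAr scalerA.
Qed.

Lemma TmDr e A B : Tm e (A + B) = Tm e A + Tm e B.
Proof. by apply/matrixP => r s; rewrite !mxE scalerDl. Qed.

Lemma TmBr e A B : Tm e (A - B) = Tm e A - Tm e B.
Proof. by apply/matrixP => r s; rewrite !mxE scalerBl. Qed.

Lemma Tm0l A : Tm 0 A = 0.
Proof. by apply/matrixP => r s; rewrite !mxE scaler0. Qed.

Definition phi (e : R) (A : 'M[k]_N) : 'M[R]_N := 1%:M + Tm e (A - 1%:M).

Lemma phiM e A B : e * e = e -> phi e A *m phi e B = phi e (A *m B).
Proof.
move=> He; rewrite /phi mulmxDl !mulmxDr !mul1mx mulmx1 TmM He -!addrA -!TmDr.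
congr (_ + Tm e _).
rewrite mulmxBl !mulmxBr !mul1mx !mulmx1.
by rewrite addrCA [B - 1%:M + _]addrC subrK addrC addrA subrK.
Qed.

Lemma phi1 e : phi e 1%:M = 1%:M.
Proof. by rewrite /phi subrr; apply/matrixP => r s; rewrite !mxE scale0r addr0. Qed.

Lemma phi_elem e X : elementary_mx X -> elementary_mx (phi e X).
Proof.
move=> [i [j [c [Hij ->]]]]; exists i, j, (c *: e); split => //.
rewrite /phi addrAC subrr add0r; congr (_ + _).
apply/matrixP => r s; rewrite !mxE.
by case: ((r == i) && (s == j)); rewrite ?mulr1 ?mulr0 ?scale0r.
Qed.

Lemma phi_ep e P : e * e = e -> elem_prod P -> elem_prod (phi e P).
Proof.
move=> He [l [Hl ->]]; elim: l Hl => [|Y l IH] Hl /=.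
  by rewrite phi1; exact: ep1.
rewrite -phiM //; apply: epM.
  by apply/ep_elem/phi_elem/Hl/mem_head.
by apply: IH => M HM; apply: Hl; rewrite inE HM orbT.
Qed.

Lemma phi_equiv e A B : e * e = e -> mxeq A B -> mxeq (phi e A) (phi e B).
Proof.
move=> He [P [HP ->]]; exists (phi e P); split; first exact: phi_ep.
by rewrite phiM.
Qed.

Lemma phi_Dk e c q : phi e (Dk c q) = diag_mx (\row_i if i == q then c *: e + (1 - e) else 1).
Proof.
apply/matrixP => r s; rewrite !mxE.
case: (r =P s) => [->|_]; rewrite ?mulr1n ?mulr0n ?subrr ?scale0r ?addr0 //.
case: (s == q); rewrite ?subrr ?scale0r ?addr0 //.
by rewrite scalerBl scale1r addrCA addrC.
Qed.

Lemma prodT (I : eqType) (s : seq I) (ef : I -> R) (Xf : I -> 'M[k]_N) :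
  uniq s -> (forall u v, u != v -> ef u * ef v = 0) ->
  foldr mulmx 1%:M [seq 1%:M + Tm (ef v) (Xf v) | v <- s] =
  1%:M + \sum_(v <- s) Tm (ef v) (Xf v).
Proof.
move=> Hs Hef; elim: s Hs => [|v s IH] /=; first by rewrite big_nil addr0.
move=> /andP[Hv Hs]; rewrite IH // big_cons mulmxDl mul1mx mulmxDr mulmx1 mulmx_sumr.
have -> : \sum_(u <- s) Tm (ef v) (Xf v) *m Tm (ef u) (Xf u) = 0.
  rewrite big_seq big1 // => u Hu; rewrite TmM Hef ?Tm0l //.
  by apply/eqP => Huv; move: Hv; rewrite Huv Hu.
by rewrite addr0 -addrA [_ + Tm _ _]addrC.
Qed.
End Transport.

Section Lift.
Variable T : pzRingType.
Variables m n : nat.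

Definition liftm (X : 'M[T]_m) : 'M[T]_(m + n) := block_mx X 0 0 1%:M.

Lemma liftmM X Y : liftm (X *m Y) = liftm X *m liftm Y.
Proof. by rewrite /liftm mulmx_block !mulmx0 !mul0mx !addr0 !add0r mulmx1. Qed.

Lemma liftm1 : liftm 1%:M = 1%:M.
Proof. by rewrite /liftm -scalar_mx_block. Qed.

Lemma liftm_elem X : elementary_mx X -> elementary_mx (liftm X).
Proof.
move=> [i [j [c [Hij ->]]]]; exists (lshift n i), (lshift n j), c; split.
  by rewrite eq_lshift.
apply/matrixP => r s; rewrite -[r]splitK -[s]splitK.
case: (split r) => r'; case: (split s) => s' /=;
rewrite ?block_mxEul ?block_mxEur ?block_mxEdl ?block_mxEdr !mxE ?eq_lshift ?eq_rshift
  ?eq_lrshift ?eq_rlshift ?mxE //=; rewrite ?andbF ?andFb ?mulr0 ?addr0 //.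
Qed.

Lemma liftm_ep P : elem_prod P -> elem_prod (liftm P).
Proof.
move=> [l [Hl ->]]; elim: l Hl => [|Y l IH] Hl /=.
  by rewrite liftm1; exact: ep1.
rewrite liftmM; apply: epM.
  by apply/ep_elem/liftm_elem/Hl/mem_head.
by apply: IH => M HM; apply: Hl; rewrite inE HM orbT.
Qed.
End Lift.

Lemma cast_blockdiag (T : pzRingType) h n (H : (h + n = n + h)%N) (f : nat -> T) :
  (n <= h)%N ->
  block_mx (diag_mx (\row_(i < h) if (i < n)%N then f i else 1)) 0 0 (1%:M : 'M_n)
  = castmx (esym H, esym H) (block_mx (diag_mx (\row_(i < n) f i)) 0 0 (1%:M : 'M_h)).
Proof.
move=> Hnh; rewrite -!diag_const_mx -!diag_mx_row.
apply/matrixP => r s; rewrite castmxE !mxE /= (inj_eq (@cast_ord_inj _ _ _)).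
congr (_ *+ _).
case: splitP => r1 Hr1; case: splitP => r2 Hr2; rewrite !mxE //=; rewrite /= in Hr2.
- by rewrite -Hr1 Hr2 ltn_ord.
- by rewrite -Hr1 Hr2 ltnNge leq_addr.
- have := ltn_ord r2; rewrite -Hr2 Hr1 => H3.
  by have := leq_trans H3 Hnh; rewrite ltnNge leq_addr.
Qed.

Section Mono.
Variable T : pzRingType.
Variable n : nat.

Definition Mono (f : 'I_n -> 'I_n) (a : 'I_n -> T) : 'M[T]_n :=
  \matrix_(i, j) if f i == j then a i else 0.

Lemma MonoM f g a b : Mono f a *m Mono g b = Mono (fun i => g (f i)) (fun i => a i * b (f i)).
Proof.
apply/matrixP => i j; rewrite !mxE (bigD1 (f i)) //= big1 ?addr0.
  by rewrite !mxE eqxx; case: (g (f i) == j); rewrite ?mulr0.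
by move=> l /negbTE Hl; rewrite !mxE eq_sym Hl mul0r.
Qed.

Lemma Mono_ext f g a b : f =1 g -> a =1 b -> Mono f a = Mono g b.
Proof. by move=> Hf Ha; apply/matrixP => i j; rewrite !mxE Hf Ha. Qed.

Lemma inv_lemma (X Y Pr : 'M[T]_n) : X *m Y = Pr -> X *m Pr = X -> Pr *m Y = Y ->
  Pr *m Pr = Pr -> (X + (1%:M - Pr)) *m (Y + (1%:M - Pr)) = 1%:M.
Proof.
move=> H1 H2 H3 H4.
rewrite mulmxDl !mulmxDr ?mulmxBr ?mulmxBl ?mulmxBr !mulmx1 ?mul1mx ?mulmxBr ?mulmxBl ?mulmx1 ?mul1mx.
by rewrite !mulmxN H1 H2 H3 H4 !subrr !addr0 add0r addrC subrK.
Qed.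
End Mono.

Lemma wsq (k : fieldType) (R : algType k) (e : R) (c : k) : e * e = e -> c * c = 1 ->
  (c *: e + (1 - e)) * (c *: e + (1 - e)) = 1.
Proof.
move=> He Hc.
have h1 : (1 - e) * e = 0 by rewrite mulrBl mul1r He subrr.
have h2 : e * (1 - e) = 0 by rewrite mulrBr mulr1 He subrr.
have h3 : (1 - e) * (1 - e) = 1 - e by rewrite mulrBr mulr1 h1 subr0.
have : e + (1 - e) = 1 by rewrite addrC subrK.
move: h1 h2 h3; move: (1 - e) => f h1 h2 h3 Hf.
rewrite mulrDl !mulrDr -!scalerAl -!scalerAr !scalerA Hc He scale1r h1 h2 h3 !scaler0 addr0 add0r.
exact: Hf.
Qed.

Unset Implicit Arguments.

Theorem lemma5p4 (k : fieldType) (E : rf_graph) (R : algType k)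
  (p : V0 E -> R) (a b : E1 E -> R) (HR : leavitt_unitization p a b)
  (star : R -> R) (Hstar : leavitt_involution star p a b)
  (h : nat) (hpos : (0 < h)%N) (z : 'I_h -> V0 E) (sigma : 'S_h)
  (Hsigma : forall t, z (sigma t) = z t) :
  let S : 'M[R]_h := \sum_(t < h) (p (z t))%:M *m delta_mx t (sigma t) in
  let Pr : 'M[R]_h := \sum_(t < h) (p (z t))%:M *m delta_mx t t in
  let U : 'M[R]_h := S + (1%:M - S *m mxstar star S) in
  let vs := undup [seq z t | t <- enum 'I_h] in
  let w (v : V0 E) : R :=
    ((-1 : k) ^+ odd_perm (restr_perm_v Hsigma v)) *: p v + (1 - p v) in
  (S *m mxstar star S = Pr /\ mxstar star S *m S = Pr /\
   Pr *m Pr = Pr /\ mxstar star Pr = Pr) /\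
  (mx_invertible U /\
   k1_eq U (diag_mx (\row_(i < size vs) nth 0 [seq w v | v <- vs] i))).
Proof.
have [Hfam _] := HR.
case: Hfam => Hidem [Horth _].
case: Hstar => st1 [stD [stZ [stM [stK [stp _]]]]].
have st0 : star 0 = 0.
  by apply: (addrI (star 0)); rewrite -stD !addr0.
have HzV : forall i, z ((sigma^-1)%g i) = z i.
  by move=> i; rewrite -Hsigma permKV.
move=> S Pr U vs w.
have HS : S = Mono sigma (fun i => p (z i)).
  apply/matrixP => i j; rewrite /S summxE (bigD1 i) //= big1 ?addr0.
    by rewrite mul_scalar_mx !mxE eqxx /= eq_sym; case: (sigma i == j); rewrite ?mulr1 ?mulr0.
  by move=> t Ht; rewrite mul_scalar_mx !mxE eq_sym (negbTE Ht) mulr0.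
have HPr : Pr = Mono id (fun i => p (z i)).
  apply/matrixP => i j; rewrite /Pr summxE (bigD1 i) //= big1 ?addr0.
    by rewrite mul_scalar_mx !mxE eqxx /= eq_sym; case: (i == j); rewrite ?mulr1 ?mulr0.
  by move=> t Ht; rewrite mul_scalar_mx !mxE eq_sym (negbTE Ht) mulr0.
have HSs : mxstar star S = Mono (sigma^-1)%g (fun i => p (z i)).
  rewrite HS; apply/matrixP => i j; rewrite !mxE.
  have -> : (sigma j == i) = ((sigma^-1)%g i == j).
    by apply/eqP/eqP => [<-|<-]; rewrite ?permK ?permKV.
  case: eqP => [<-|_] //; by rewrite stp HzV.
have Hpp : forall i, p (z i) * p (z i) = p (z i) by move=> i; rewrite Hidem.
have HSSs : S *m mxstar star S = Pr.
  rewrite HSs HS HPr MonoM; apply: Mono_ext => i /=; first by rewrite permK.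
  by rewrite Hsigma Hpp.
have HSsS : mxstar star S *m S = Pr.
  rewrite HSs HS HPr MonoM; apply: Mono_ext => i /=; first by rewrite permKV.
  by rewrite HzV Hpp.
have HPrPr : Pr *m Pr = Pr.
  by rewrite HPr MonoM; apply: Mono_ext => i //=; rewrite Hpp.
have HPrs : mxstar star Pr = Pr.
  rewrite HPr; apply/matrixP => i j; rewrite !mxE eq_sym.
  by case: eqP => [->|_]; rewrite ?stp.
have HSPr : S *m Pr = S.
  by rewrite HS HPr MonoM; apply: Mono_ext => i //=; rewrite Hsigma Hpp.
have HPrS : Pr *m S = S.
  by rewrite HS HPr MonoM; apply: Mono_ext => i //=; rewrite Hpp.
have HSsPr : mxstar star S *m Pr = mxstar star S.
  by rewrite HSs HPr MonoM; apply: Mono_ext => i //=; rewrite HzV Hpp.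
have HPrSs : Pr *m mxstar star S = mxstar star S.
  by rewrite HSs HPr MonoM; apply: Mono_ext => i //=; rewrite Hpp.
split; first by [].
have HU : U = S + (1%:M - Pr) by rewrite /U HSSs.
split.
  exists (mxstar star S + (1%:M - Pr)); rewrite HU; split; exact: inv_lemma.
pose tau v := restr_perm_v Hsigma v.
have Htau : forall v i, tau v i = if z i == v then sigma i else i.
  by move=> v i; rewrite /tau /restr_perm_v permE.
pose c v := (-1 : k) ^+ odd_perm (tau v).
pose q v : 'I_h := insubd (Ordinal hpos) (index v vs).
have Huniq : uniq vs := undup_uniq _.
have Hsize : (size vs <= h)%N.
  by apply: leq_trans (size_undup _) _; rewrite size_map size_enum_ord.
have Hq : forall v, v \in vs -> val (q v) = index v vs.
  move=> v Hv; rewrite /q val_insubd.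
  by rewrite (leq_trans _ Hsize) // index_mem.
have Hzin : forall i, z i \in vs.
  by move=> i; rewrite mem_undup; apply: map_f; rewrite mem_enum.
have HUfold : U = foldr mulmx 1%:M [seq phi (p v) (perm_mx (tau v)) | v <- vs].
  rewrite /phi (@prodT _ _ _ _ vs p (fun v => perm_mx (tau v) - 1%:M)) //; last first.
    by move=> u v /eqP Huv; apply: Horth.
  rewrite HU HS HPr; apply/matrixP => i j.
  rewrite !mxE summxE (bigD1_seq (z i)) //= big1 ?addr0; last first.
    by move=> v Hv; rewrite !mxE Htau (eq_sym (z i)) (negbTE Hv) subrr scale0r.
  rewrite !mxE Htau eqxx.
  case: (sigma i == j); case: (i == j);
    rewrite ?scalerBl ?scale1r ?scale0r ?subrr ?add0r ?addr0 ?sub0r ?subr0 //.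
  by rewrite addrCA subrr addr0.
pose dr v : 'rV[R]_h := \row_i if i == q v then c v *: p v + (1 - p v) else 1.
have Hequiv : mxeq U (foldr mulmx 1%:M [seq diag_mx (dr v) | v <- vs]).
  rewrite HUfold; apply: equiv_foldr.
    move=> v i; rewrite !mxE; case: (i == q v); rewrite ?mulr1 //.
    by apply: wsq; [apply: Hidem | rewrite -expr2 sqrr_sign].
  by move=> v; rewrite /dr -phi_Dk; apply: phi_equiv; [apply: Hidem | apply: perm_equiv].
pose Dh : 'M[R]_h := diag_mx (\row_(i < h) if (i < size vs)%N then nth 0 [seq w v | v <- vs] i else 1).
have HDh : foldr mulmx 1%:M [seq diag_mx (dr v) | v <- vs] = Dh.
  have -> : [seq diag_mx (dr v) | v <- vs] = [seq phi (p v) (Dk (c v) (q v)) | v <- vs].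
    by apply: eq_map => v; rewrite phi_Dk.
  rewrite /phi (@prodT _ _ _ _ vs p (fun v => Dk (c v) (q v) - 1%:M)) //; last first.
    by move=> u v /eqP Huv; apply: Horth.
  apply/matrixP => i j; rewrite !mxE summxE.
  case: (i =P j) => [<-|Hij]; last first.
    rewrite big1 ?addr0 ?mulr0n //.
    by move=> v _; rewrite !mxE; move/eqP/negbTE: Hij => ->; rewrite !mulr0n subrr scale0r.
  case: ifP => Hi.
    set v0 := nth (z i) vs i.
    have Hv0 : v0 \in vs := mem_nth _ Hi.
    have Hqv0 : q v0 = i by apply: val_inj; rewrite Hq // index_uniq.
    rewrite (bigD1_seq v0) //= big_seq_cond big1 ?addr0.
      rewrite !mxE Hqv0 eqxx ?mulr1n (nth_map (z i)) // /w -/v0.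
      by rewrite scalerBl scale1r addrCA.
    move=> v /andP[Hv Hvv0]; rewrite !mxE.
    have -> : (i == q v) = false.
      apply/negbTE/eqP => Hiq; move/eqP: Hvv0; apply.
      have Hiv : index v vs = i by rewrite -Hq // -Hiq.
      by rewrite /v0 -Hiv nth_index.
    by rewrite ?mulr1n subrr scale0r.
  rewrite big_seq big1 ?addr0 // => v Hv; rewrite !mxE.
  have -> : (i == q v) = false.
    apply/negbTE/eqP => Hiq; move: Hi; rewrite Hiq Hq // index_mem Hv.
    by [].
  by rewrite ?mulr1n subrr scale0r.
have [P [HP HUP]] : mxeq U Dh by rewrite -HDh.
exists (size vs), h, (addnC h (size vs)), (liftm (size vs) P); split.
  exact: liftm_ep.
rewrite HUP.
have -> : block_mx (P *m Dh) 0 0 (1%:M : 'M[R]_(size vs)) = liftm (size vs) (P *m Dh) by [].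
rewrite liftmM; congr (_ *m _).
exact: (@cast_blockdiag R h (size vs) (addnC h (size vs)) (fun i => nth 0 [seq w v | v <- vs] i) Hsize).
Qed.
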